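(* Let $\mathcal D$ be any class of dependency notions and let $\phi\in\mathbf{FO}(\mathcal D,\sqcup)$. Then $\phi$ is equivalent to some formula of the form $\bigsqcup_{i=1}^n\psi_i$ where every $\psi_i$ is in $\mathbf{FO}(\mathcal D)$.
   Context: Team semantics (lax version). For a structure $\mathfrak M$ with domain $M$, a team $X$ is a (possibly empty) set of assignments $s:V\to M$, $V$ a finite set of variables; $X(\vec v)=\{s(\vec v):s\in X\}$. Satisfaction for formulas in negation normal form: first-order literal $\alpha$: every $s\in X$ satisfies $\alpha$ (Tarski); $\psi\vee\theta$: $X=Y\cup Z$ with $\mathfrak M\models_Y\psi$, $\mathfrak M\models_Z\theta$; $\psi\wedge\theta$: both; $\exists v\psi$: some $F:X\to\mathcal P(M)\setminus\{\emptyset\}$ with $\mathfrak M\models_{X[F/v]}\psi$, $X[F/v]=\{s[m/v]:s\in X,m\in F(s)\}$; $\forall v\psi$: $\mathfrak M\models_{X[M/v]}\psi$, $X[M/v]=\{s[m/v]:s\in X,m\in M\}$. A $k$-ary dependency notion $\mathbf D$ is an isomorphism-closed class of structures $(M,R)$, $R$ a $k$-ary relation; $\mathfrak M\models_X\mathbf D\vec v$ iff $(M,X(\vec v))\in\mathbf D$. Classical disjunction: $\mathfrak M\models_X\phi\sqcup\psi$ iff $\mathfrak M\models_X\phi$ or $\mathfrak M\models_X\psi$. $\mathbf{FO}(\mathcal D)$ (resp. $\mathbf{FO}(\mathcal D,\sqcup)$) is first-order logic in negation normal form extended with the atoms of $\mathcal D$ (resp. and $\sqcup$). Two formulas are equivalent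 if satisfied by the same teams in all structures. *)

(* Defs.v *)
From mathcomp Require Import all_boot.
Set Implicit Arguments.
Unset Strict Implicit.
Unset Printing Implicit Defensive.

Record depnotion (k : nat) := DepNotion {
  dn_cls : forall M : Type, (k.-tuple M -> Prop) -> Prop;
  dn_iso : forall (M N : Type) (f : M -> N), bijective f ->
     forall (R : k.-tuple M -> Prop) (S : k.-tuple N -> Prop),
       (forall t, R t <-> S (map_tuple f t)) ->
       (dn_cls R <-> dn_cls S)
}.

Section Syntax.
(* signature: function symbols and relation symbols (arity given by the
   length of the argument list); I indexes the class of dependency notions *)
Context (Fsym Rsym I : Type) (ar : I -> nat).

Inductive term : Type :=
  | TVar of nat
  | TApp of Fsym & seq term.

(* formulas of FO(D, ⊔) in negation normal form *)
Inductive form : Type :=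
  | FEq of term & term
  | FNeq of term & term
  | FRel of Rsym & seq term
  | FNRel of Rsym & seq term
  | FDep (i : I) of (ar i).-tuple nat
  | FAnd of form & form
  | FOr of form & form        (* team (split) disjunction *)
  | FEx of nat & form
  | FAll of nat & form
  | FCOr of form & form.      (* classical disjunction ⊔ *)

Fixpoint tvars (t : term) : seq nat :=
  match t with
  | TVar v => [:: v]
  | TApp _ ts => flatten (map tvars ts)
  end.

Fixpoint fv (p : form) : seq nat :=
  match p with
  | FEq t1 t2 | FNeq t1 t2 => tvars t1 ++ tvars t2
  | FRel _ ts | FNRel _ ts => flatten (map tvars ts)
  | FDep _ vs => tval vs
  | FAnd p q | FOr p q | FCOr p q => fv p ++ fv q
  | FEx v p | FAll v p => [seq w <- fv p | w != v]
  end.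

(* membership in FO(D), i.e. no classical disjunction *)
Fixpoint sqcup_free (p : form) : bool :=
  match p with
  | FAnd p q | FOr p q => sqcup_free p && sqcup_free q
  | FEx _ p | FAll _ p => sqcup_free p
  | FCOr _ _ => false
  | _ => true
  end.

End Syntax.

Record structure (Fsym Rsym : Type) := Structure {
  dom : Type;
  dom_inh : inhabited dom;
  funI : Fsym -> seq dom -> dom;
  relI : Rsym -> seq dom -> Prop
}.

Section Semantics.
Context (Fsym Rsym I : Type) (ar : I -> nat) (D : forall i, depnotion (ar i)).
Context (A : structure Fsym Rsym).

(* an assignment is a partial map nat -> dom A (with finite domain, see team_on) *)
Definition assignment := nat -> option (dom A).
Definition team := assignment -> Prop.

Definition upd (s : assignment) (v : nat) (m : dom A) : assignment :=
  fun w => if w == v then Some m else s w.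

Fixpoint olist (l : seq (option (dom A))) : option (seq (dom A)) :=
  match l with
  | [::] => Some [::]
  | o :: l' => match o, olist l' with
               | Some a, Some r => Some (a :: r)
               | _, _ => None
               end
  end.

Fixpoint teval (s : assignment) (t : term Fsym) : option (dom A) :=
  match t with
  | TVar v => s v
  | TApp f ts => omap (funI f) (olist (map (teval s) ts))
  end.

Definition team_rel k (X : team) (vs : k.-tuple nat) : k.-tuple (dom A) -> Prop :=
  fun t => exists2 s, X s & [seq s v | v <- vs] = [seq Some m | m <- t].

Fixpoint sat (X : team) (p : form Fsym Rsym ar) : Prop :=
  match p with
  | FEq t1 t2 => forall s, X s -> exists a, teval s t1 = Some a /\ teval s t2 = Some a
  | FNeq t1 t2 => forall s, X s -> exists a b,
        [/\ teval s t1 = Some a, teval s t2 = Some b & a <> b]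
  | FRel r ts => forall s, X s -> exists l,
        olist (map (teval s) ts) = Some l /\ relI r l
  | FNRel r ts => forall s, X s -> exists l,
        olist (map (teval s) ts) = Some l /\ ~ relI r l
  | FDep i vs => dn_cls (D i) (team_rel X vs)
  | FAnd p q => sat X p /\ sat X q
  | FOr p q => exists (Y Z : team),
        [/\ (forall s, X s <-> Y s \/ Z s), sat Y p & sat Z q]
  | FEx v p => exists F : assignment -> dom A -> Prop,
        (forall s, X s -> exists m, F s m) /\
        sat (fun s' => exists s m, [/\ X s, F s m & s' = upd s v m]) p
  | FAll v p => sat (fun s' => exists s m, X s /\ s' = upd s v m) p
  | FCOr p q => sat X p \/ sat X q
  end.

End Semantics.

Definition team_on (Fsym Rsym : Type) (A : structure Fsym Rsym)
    (V : seq nat) (X : team A) : Prop :=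
  forall s, X s -> forall w, (exists a, s w = Some a) <-> w \in V.

Definition equivalent (Fsym Rsym I : Type) (ar : I -> nat)
    (D : forall i, depnotion (ar i)) (p q : form Fsym Rsym ar) : Prop :=
  forall (A : structure Fsym Rsym) (V : seq nat) (X : team A),
    team_on V X -> {subset fv p <= V} -> {subset fv q <= V} ->
    (sat D X p <-> sat D X q).

(* Main.v *)
Require Import Defs.
From mathcomp Require Import all_boot.
From Stdlib Require List.

Section DNF.
Context (Fsym Rsym I : Type) (ar : I -> nat) (D : forall i, depnotion (ar i)).
Notation F := (form Fsym Rsym ar).

Fixpoint dnf (p : F) : list F :=
  match p with
  | FAnd p q => List.flat_map (fun a => List.map (fun b => FAnd a b) (dnf q)) (dnf p)
  | FOr p q => List.flat_map (fun a => List.map (fun b => FOr a b) (dnf q)) (dnf p)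
  | FEx v p => List.map (fun a => FEx v a) (dnf p)
  | FAll v p => List.map (fun a => FAll v a) (dnf p)
  | FCOr p q => dnf p ++ dnf q
  | _ => [:: p]
  end.

Lemma dnf_free p q : List.In q (dnf p) -> sqcup_free q.
Proof.
elim: p q => //= [t1 t2|t1 t2|r ts|r ts|i vs|p IHp q IHq|p IHp q IHq|v p IHp|v p IHp|p IHp q IHq] x;
  try (by case=> [<-|[]]).
- move/List.in_flat_map=> [a [Ha /List.in_map_iff [b [<- Hb]]]] /=.
  by rewrite (IHp _ Ha) (IHq _ Hb).
- move/List.in_flat_map=> [a [Ha /List.in_map_iff [b [<- Hb]]]] /=.
  by rewrite (IHp _ Ha) (IHq _ Hb).
- by move/List.in_map_iff=> [a [<- Ha]] /=; apply: IHp.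
- by move/List.in_map_iff=> [a [<- Ha]] /=; apply: IHp.
- by move=> H0; case: (List.in_app_or _ _ _ H0)=> H; [apply: IHp|apply: IHq].
Qed.

Lemma dnf_ne p : exists a l, dnf p = a :: l.
Proof.
elim: p => /=; try by do 2 eexists.
- move=> p [a [l ->]] q [b [m ->]]; by do 2 eexists.
- move=> p [a [l ->]] q [b [m ->]]; by do 2 eexists.
- move=> v p [a [l ->]]; by do 2 eexists.
- move=> v p [a [l ->]]; by do 2 eexists.
- move=> p [a [l ->]] q _; by do 2 eexists.
Qed.

Lemma dnf_sat A (X : team A) p :
  sat D X p <-> exists q, List.In q (dnf p) /\ sat D X q.
Proof.
elim: p X => /= [t1 t2|t1 t2|r ts|r ts|i vs|p IHp q IHq|p IHp q IHq|v p IHp|v p IHp|p IHp q IHq] X;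
  try (split; [move=> H; exists (FEq t1 t2) || idtac|]; fail).
all: try (split; [move=> H; eexists; split; [left; reflexivity|exact H]|
                  by move=> [x [[<-|[]] H]]]).
- split.
  + move=> [/IHp [a [Ha Sa]] /IHq [b [Hb Sb]]]; exists (FAnd a b); split=> //.
    apply/List.in_flat_map; exists a; split=> //; apply/List.in_map_iff; by exists b.
  + move=> [x [/List.in_flat_map [a [Ha /List.in_map_iff [b [<- Hb]]]] [Sa Sb]]].
    by split; [apply/IHp; exists a|apply/IHq; exists b].
- split.
  + move=> [Y [Z [HX /IHp [a [Ha Sa]] /IHq [b [Hb Sb]]]]]; exists (FOr a b); split.
    * apply/List.in_flat_map; exists a; split=> //; apply/List.in_map_iff; by exists b.
    * by exists Y, Z.
  + move=> [x [/List.in_flat_map [a [Ha /List.in_map_iff [b [<- Hb]]]] [Y [Z [HX Sa Sb]]]]].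
    exists Y, Z; split=> //; [apply/IHp; exists a|apply/IHq; exists b]; by [].
- split.
  + move=> [G [HG /IHp [a [Ha Sa]]]]; exists (FEx v a); split.
    * by apply/List.in_map_iff; exists a.
    * by exists G.
  + move=> [x [/List.in_map_iff [a [<- Ha]] [G [HG Sa]]]].
    exists G; split=> //; apply/IHp; by exists a.
- split.
  + move=> /IHp [a [Ha Sa]]; exists (FAll v a); split=> //.
    by apply/List.in_map_iff; exists a.
  + move=> [x [/List.in_map_iff [a [<- Ha]] Sa]]; apply/IHp; by exists a.
- split.
  + move=> [/IHp [a [Ha Sa]]|/IHq [a [Ha Sa]]]; exists a; split=> //;
      apply: List.in_or_app; by [left|right].
  + move=> [x [H0 S]]; case: (List.in_app_or _ _ _ H0)=> H; [left; apply/IHp|right; apply/IHq]; by exists x.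
Qed.

Lemma foldr_sat A (X : team A) p0 ps :
  sat D X (foldr (@FCOr Fsym Rsym I ar) p0 ps) <->
  exists q, List.In q (p0 :: ps) /\ sat D X q.
Proof.
elim: ps => /= [|p ps IH].
  split; [by move=> H; exists p0; split; [left|]|by move=> [q [[<-|[]] H]]].
split.
- move=> [H|/IH [q [Hq Sq]]]; first by exists p; split; [right; left|].
  exists q; split=> //; case: Hq => [<-|H]; [left|right; right]; by [].
- move=> [q [[E|[E|H]] Sq]].
  + subst q; right; apply/IH; exists p0; split; [left|]; by [].
  + subst q; by left.
  + right; apply/IH; exists q; split; [right|]; by [].
Qed.

Lemma In_all (f : F -> bool) l : (forall q, List.In q l -> f q) -> all f l.
Proof. elim: l => //= a l IH H; rewrite H ?IH //; [move=> q Hq; apply: H; right|left]; by []. Qed.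

End DNF.

Theorem mainTheorem10 (Fsym Rsym I : Type) (ar : I -> nat)
    (D : forall i, depnotion (ar i)) (phi : form Fsym Rsym ar) :
  exists (psi0 : form Fsym Rsym ar) (psis : seq (form Fsym Rsym ar)),
    all (@sqcup_free Fsym Rsym I ar) (psi0 :: psis) /\
    equivalent D phi (foldr (@FCOr Fsym Rsym I ar) psi0 psis).
Proof.
have [a [l E]] := @dnf_ne _ _ _ _ phi.
exists a, l; split.
  by apply: In_all => q Hq; apply: (@dnf_free _ _ _ _ phi); rewrite E.
move=> A V X _ _ _.
by rewrite foldr_sat dnf_sat E.
Qed.
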